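(* Let $f:\mathbb{R}^n\to\mathbb{R}$ be a continuously differentiable convex function. Let $H$ be a diagonal matrix with nonnegative diagonal entries such that $f(y)\le f(x)+\nabla f(x)^T(y-x)+\tfrac12\|y-x\|_H^2$ for all $x,y$, and let $D$ be diagonal with $D\succ H$. Let $(x_k)$ be a sequence generated by the IWHT algorithm with $D$, and assume $(x_k)$ is bounded. Then $f(x_k)$ converges to a limit $f^*$ and there exist $K\in\mathbb{N}$ and $c>0$ such that $f(x_k)-f^*\le c/k$ for all $k\ge K$. If moreover $f$ is $s$-restricted strongly convex, then $f(x_k)$ converges to $f^*$ linearly, i.e. there exist $c>0$ and $\rho\in(0,1)$ with $f(x_k)-f^*\le c\rho^k$ for all sufficiently large $k$.
   Context: $\|z\|_A^2=z^TAz$. $C_s=\{x\in\mathbb{R}^n:\|x\|_0\le s\}$ for a positive integer $s$, where $\|x\|_0$ is the number of nonzero entries. $\mathcal{P}_{C_s}(z)=\operatorname{argmin}_{y\in C_s}\|y-z\|_2^2$ (set-valued). IWHT with diagonal $D\succ0$: start from $x_0\in C_s$; pick $y_{k+1}\in\mathcal{P}_{C_s}\big(D^{1/2}x_k-D^{-1/2}\nabla f(x_k)\big)$ and set $x_{k+1}=D^{-1/2}y_{k+1}$. $f$ is $s$-restricted strongly convex if there is $\sigma_s>0$ with $f(y)\ge f(x)+\nabla f(x)^T(y-x)+\frac{\sigma_s}{2}\|x-y\|_2^2$ for all $x,y$ with $\|x-y\|_0\le s$. *)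

(* Defs.v *)
From HB Require Import structures.
From mathcomp Require Import all_boot all_order all_algebra.
From mathcomp Require Import all_classical all_reals all_analysis.
Set Implicit Arguments. Unset Strict Implicit. Unset Printing Implicit Defensive.
Import Order.TTheory GRing.Theory Num.Theory.
Import numFieldNormedType.Exports.
Local Open Scope ring_scope.

Section Defs.
Context {R : realType} {n : nat}.
Implicit Types (x y z : 'rV[R]_n) (A : 'M[R]_n).

Definition dotv x y : R := \sum_i x 0 i * y 0 i.

(* ||z||_A^2 = z^T A z *)
Definition qnorm A z : R := \sum_i \sum_j z 0 i * A i j * z 0 j.

Definition l0 x : nat := #|[set i | x 0 i != 0]|.

Definition Cs (s : nat) x : Prop := (l0 x <= s)%N.

Definition projCs (s : nat) z y : Prop :=
  Cs s y /\ forall y', Cs s y' -> dotv (y - z) (y - z) <= dotv (y' - z) (y' - z).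

Definition grad (f : 'rV[R]_n -> R) x : 'rV[R]_n :=
  \row_i ('D_(delta_mx 0 i) f x).

Definition C1 (f : 'rV[R]_n -> R) : Prop :=
  (forall x, differentiable f x) /\ continuous (grad f).

Definition convexf (f : 'rV[R]_n -> R) : Prop :=
  forall x y (t : R), 0 <= t <= 1 ->
    f (t *: x + (1 - t) *: y) <= t * f x + (1 - t) * f y.

Definition diagm A : Prop := forall i j, i != j -> A i j = 0.

Definition pd_gt A B : Prop := forall z, z != 0 -> 0 < qnorm (A - B) z.

(* D^{1/2} and D^{-1/2} for a diagonal D ≻ 0 *)
Definition dsqrt A : 'M[R]_n := diag_mx (\row_i Num.sqrt (A i i)).
Definition disqrt A : 'M[R]_n := diag_mx (\row_i (Num.sqrt (A i i))^-1).

Definition IWHT (f : 'rV[R]_n -> R) (s : nat) A (x : nat -> 'rV[R]_n) : Prop :=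
  Cs s (x 0%N) /\
  forall k, exists y, projCs s (x k *m dsqrt A - grad f (x k) *m disqrt A) y /\
                      x k.+1 = y *m disqrt A.

Definition restricted_strongly_convex (f : 'rV[R]_n -> R) (s : nat) : Prop :=
  exists sigma : R, 0 < sigma /\
    forall x y, (l0 (x - y) <= s)%N ->
      f x + dotv (grad f x) (y - x) + sigma / 2 * dotv (x - y) (x - y) <= f y.

End Defs.

(* Main.v *)
Require Import Defs.
From HB Require Import structures.
From mathcomp Require Import all_boot all_order all_algebra.
From mathcomp Require Import all_classical all_reals all_analysis.
From mathcomp Require Import ring lra zify.
Import Order.TTheory GRing.Theory Num.Theory.
Import numFieldNormedType.Exports.
Local Open Scope classical_set_scope.
Local Open Scope ring_scope.

Section H.
Context {R : realType} {n : nat}.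
Implicit Types (x y z u v : 'rV[R]_n) (A : 'M[R]_n).

Lemma entry_le_norm v i : `|v 0 i| <= `|v|.
Proof.
rewrite [X in _ <= X]/Num.norm /= mx_normrE.
by apply: (le_bigmax _ _ (0, i)).
Qed.

Lemma qnorm_diag A z : diagm A -> qnorm A z = \sum_i A i i * z 0 i ^+ 2.
Proof.
move=> dA; apply: eq_bigr => i _.
rewrite (bigD1 i) //= big1 ?addr0; first by rewrite expr2 mulrAC mulrC mulrA.
by move=> j ji; rewrite dA ?mulr0 ?mul0r // eq_sym.
Qed.

Lemma grad_dir f x v : differentiable f x -> 'D_v f x = dotv (grad f x) v.
Proof.
move=> df; rewrite deriveE // {1}(row_sum_delta v) linear_sum /dotv.
apply: eq_bigr => i _; rewrite linearZ /= mxE -deriveE //.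
by rewrite mulrC.
Qed.

Lemma grad_ineq f x y : convexf f -> differentiable f x ->
  f x + dotv (grad f x) (y - x) <= f y.
Proof.
move=> cf df; rewrite -grad_dir // -lerBrDl.
have cv := @diff_derivable _ _ _ f x (y - x) df.
rewrite /derive; apply: limr_le => //.
near=> h.
have h0 : h != 0 by near: h; exact: nbhs_dnbhs_neq.
have h1 : `|h| < 1 by near: h; exact: dnbhs0_lt.
rewrite /=.
have [hp|hn] := ltrP 0 h.
  have hle : h <= 1 by move: h1; rewrite gtr0_norm // => /ltW.
  have E : h *: (y - x) + x = h *: y + (1 - h) *: x.
    by apply/rowP => i; rewrite !mxE; ring.
  rewrite E; have := cf y x h; rewrite (ltW hp) hle => /(_ isT) Hc.
  rewrite ler_pdivrMl //; move: Hc; lra.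
have hneg : h < 0 by rewrite lt_neqAle h0 hn.
have hgt : -1 < h by move: h1; rewrite ltr0_norm // ltrNl.
set p := h *: (y - x) + x.
have t01 : 0 <= (1 - h)^-1 <= 1.
  apply/andP; split; first by rewrite invr_ge0; lra.
  by rewrite invr_le1 ?unitfE; lra.
have := cf p y _ t01.
have E : (1 - h)^-1 *: p + (1 - (1 - h)^-1) *: y = x.
  apply/rowP => i; rewrite !mxE; field; lra.
rewrite E => Hc.
have Hc2 : (1 - h) * f x <= f p - h * f y.
  have hp : 0 < 1 - h by lra.
  have ht : (1 - h) * (1 - h)^-1 = 1 by rewrite mulfV //; lra.
  have := ler_wpM2l (ltW hp) Hc.
  rewrite mulrDr !mulrA ht mul1r mulrBr mulr1 ht; lra.
have H3 : h * (f y - f x) <= f p - f x by lra.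
have hi : h^-1 <= 0 by rewrite invr_le0 ltW.
have := ler_wnM2l hi H3; rewrite mulrA mulVf // mul1r => H4.
exact: H4.
Unshelve. all: by end_near. Qed.
End H.

Section RealFacts.
Context {R : realType}.

Lemma amgm (t a b : R) : 0 < t -> a * b <= t / 2 * a ^+ 2 + (2 * t)^-1 * b ^+ 2.
Proof.
move=> tp.
have u0 : 0 < t^-1 by rewrite invr_gt0.
have tu : t * t^-1 = 1 by rewrite mulfV // gt_eqF.
have := mulr_ge0 (ltW u0) (sqr_ge0 (t * a - b)).
have -> : (2 * t)^-1 = 2^-1 * t^-1 by rewrite invfM.
set u := t^-1 in u0 tu *.
have E : u * (t * a - b) ^+ 2 = (t * u) * t * a ^+ 2 - 2 * (t * u) * a * b + u * b ^+ 2 by ring.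
rewrite tu in E.
rewrite E; lra.
Qed.

Lemma sq_bound (r E B : R) : 0 <= r -> 0 < B -> 0 <= E ->
  (forall eps t, 0 < eps -> 0 < t -> r <= eps + t / 2 * E + (2 * t)^-1 * B) ->
  r ^+ 2 <= B * E.
Proof.
move=> r0 B0 E0 h.
have [->|rp] := eqVneq r 0; first by rewrite expr0n /= mulr_ge0 // ltW.
have rpos : 0 < r by rewrite lt0r rp.
apply/ler_addgt0Pr => eps ep.
have e2 : 0 < eps / (2 * r) by rewrite divr_gt0 // mulr_gt0.
have := h _ (B / r) e2 (divr_gt0 B0 rpos).
have -> : (2 * (B / r))^-1 * B = r / 2 by field; rewrite ?gt_eqF.
move=> hh.
have hh2 : r / 2 <= eps / (2 * r) + B / r / 2 * E by lra.
have := ler_wpM2l (ltW (mulr_gt0 (ltr0n _ 2) rpos)) hh2.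
have -> : 2 * r * (r / 2) = r ^+ 2 by rewrite expr2; field.
have -> : 2 * r * (eps / (2 * r) + B / r / 2 * E) = eps + B * E.
  by field; rewrite gt_eqF.
lra.
Qed.

Lemma recA (r : nat -> R) (A : R) K0 : 0 < A -> (forall k, 0 <= r k) ->
  (forall k, (K0 <= k)%N -> r k.+1 ^+ 2 <= A * (r k - r k.+1)) ->
  exists K c, 0 < c /\ forall k, (K <= k)%N -> r k <= c / k%:R.
Proof.
move=> Ap r0 hr.
pose c0 := r K0 + 2 * A.
have c0A : 2 * A <= c0 by have := r0 K0; rewrite /c0; lra.
have claim : forall j, r (K0 + j)%N * (j.+1)%:R <= c0.
  elim => [|j IH]; first by rewrite addn0 mulr1 /c0; lra.
  set N := (j.+1)%:R in IH.
  have N1 : 1 <= N by rewrite /N ler1n.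
  have -> : (j.+2)%:R = N + 1 :> R by rewrite /N -natr1.
  rewrite addnS.
  set b := r (K0 + j)%N in IH *; set a := r (K0 + j).+1.
  have a0 : 0 <= a := r0 _.
  have hab : a ^+ 2 <= A * (b - a) by apply: hr; rewrite leq_addr.
  rewrite leNgt; apply/negP => hc.
  have h1 : a ^+ 2 * N + A * a * N <= A * c0.
    have : (a ^+ 2 + A * a) * N <= A * b * N.
      by apply: ler_wpM2r; [lra | lra].
    have : A * (b * N) <= A * c0 by apply: ler_wpM2l; [lra | exact: IH].
    lra.
  have h2 : A * c0 < A * (a * (N + 1)) by rewrite ltr_pM2l.
  have h3 : a ^+ 2 * N < A * a by lra.
  have apos : 0 < a.
    rewrite lt0r a0 andbT; apply/negP => /eqP a00.
    by move: h3; rewrite a00 expr0n /= !mul0r mulr0 ltxx.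
  have h4 : a * N < A.
    by rewrite -(ltr_pM2l apos); move: h3; rewrite expr2; lra.
  have h5 : a <= a * N by rewrite ler_peMr.
  lra.
exists (2 * K0).+1%N, (2 * c0); split; first lra.
move=> k hk.
have kK : (K0 <= k)%N by move: hk; lia.
have kpos : (0 < k)%N by move: hk; lia.
have kp : 0 < k%:R :> R by rewrite ltr0n.
rewrite ler_pdivlMr //.
have := claim (k - K0)%N; rewrite subnKC //.
have : k%:R <= 2 * ((k - K0).+1)%:R :> R.
  rewrite -natrM ler_nat; move: hk kK; lia.
have := r0 k.
nra.
Qed.

Lemma recB (r : nat -> R) (b : R) K0 : 0 < b -> (forall k, 0 <= r k) ->
  (forall k, (K0 <= k)%N -> r k.+1 <= b * (r k - r k.+1)) ->
  exists c rho, 0 < c /\ 0 < rho < 1 /\ forall k, (K0 <= k)%N -> r k <= c * rho ^+ k.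
Proof.
move=> bp r0 hr.
pose rho := b / (1 + b).
have rp : 0 < rho by rewrite divr_gt0 //; lra.
have r1 : rho < 1 by rewrite ltr_pdivrMr; lra.
have step : forall k, (K0 <= k)%N -> r k.+1 <= rho * r k.
  move=> k hk; have := hr k hk; rewrite /rho mulrAC ler_pdivlMr; last by lra.
  move=> h; lra.
have claim : forall j, r (K0 + j)%N <= r K0 * rho ^+ j.
  elim => [|j IH]; first by rewrite addn0 expr0 mulr1.
  rewrite addnS; apply: le_trans (step _ (leq_addr _ _)) _.
  rewrite exprS [r K0 * _]mulrCA; have rp0 : 0 <= rho := ltW rp; nra.
exists (r K0 / rho ^+ K0 + 1), rho; split.
  by rewrite ltr_wpDl // divr_ge0 // exprn_ge0 // ltW.
split; first by rewrite rp r1.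
move=> k hk; have := claim (k - K0)%N; rewrite subnKC // => h.
apply: le_trans h _.
have -> : rho ^+ k = rho ^+ K0 * rho ^+ (k - K0) by rewrite -exprD subnKC.
rewrite mulrDl mul1r mulrA divfK ?expf_neq0 ?gt_eqF //.
by rewrite lerDl mulr_ge0 // exprn_ge0 // ltW.
Qed.

Definition supp {n} (v : 'rV[R]_n) : {set 'I_n} := [set i | v 0 i != 0].

Lemma supp_rec {n} (x : nat -> 'rV[R]_n) : exists K0, forall k, (K0 <= k)%N ->
  forall N, exists m, (N <= m)%N /\ supp (x m) = supp (x k).
Proof.
have h : forall S : {set 'I_n}, exists N : nat,
    (forall N', exists m, (N' <= m)%N /\ supp (x m) = S) \/
    (forall m, (N <= m)%N -> supp (x m) != S).
  move=> S; case: (pselect (forall N', exists m, (N' <= m)%N /\ supp (x m) = S)).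
    by move=> p; exists 0%N; left.
  move=> /existsNP [N' hN']; exists N'; right => m hm; apply/eqP => e.
  by apply: hN'; exists m.
case: (choice h) => Nf hNf.
exists (\max_(S : {set 'I_n}) Nf S)%N => k hk.
case: (hNf (supp (x k))) => [//|hb].
have := hb k (leq_trans (@leq_bigmax _ (fun S => Nf S) (supp (x k))) hk).
by rewrite eqxx.
Qed.

Lemma sum_amgm {n} (t : R) (a b : 'I_n -> R) : 0 < t ->
  \sum_i a i * b i <= t / 2 * \sum_i a i ^+ 2 + (2 * t)^-1 * \sum_i b i ^+ 2.
Proof.
move=> tp; rewrite !mulr_sumr -big_split; apply: ler_sum => i _; exact: amgm.
Qed.

End RealFacts.

Section Alg.
Context {R : realType} {n s : nat} (f : 'rV[R]_n -> R) (H D : 'M[R]_n)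
  (x : nat -> 'rV[R]_n).
Hypotheses (C1f : C1 f) (cvf : convexf f) (dH : diagm H) (H0 : forall i, 0 <= H i i)
  (desc : forall u v, f v <= f u + dotv (grad f u) (v - u) + 2^-1 * qnorm H (v - u))
  (dD : diagm D) (DH : pd_gt D H) (iw : IWHT f s D x).


Lemma dmh_pos i : 0 < D i i - H i i.
Proof.
have dDH : diagm (D - H) by move=> a b ab; rewrite !mxE dD ?dH // subr0.
have := DH ('e_i); rewrite qnorm_diag // (bigD1 i) //= big1 ?addr0.
  rewrite !mxE !eqxx /= expr1n mulr1; apply.
  apply/negP => /eqP /rowP /(_ i); rewrite !mxE !eqxx /=.
  by move/eqP; rewrite oner_eq0.
by move=> j ji; rewrite !mxE (negbTE ji) /= expr0n /= mulr0.
Qed.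

Lemma d_pos i : 0 < D i i.
Proof. have := dmh_pos i; have := H0 i; lra. Qed.

Definition sq (i : 'I_n) := Num.sqrt (D i i).
Lemma sq_pos i : 0 < sq i.
Proof. by rewrite sqrtr_gt0 d_pos. Qed.
Lemma sq2 i : sq i ^+ 2 = D i i.
Proof. by rewrite sqr_sqrtr // ltW // d_pos. Qed.

Lemma dsqrtE (v : 'rV[R]_n) i : (v *m dsqrt D) 0 i = v 0 i * sq i.
Proof. by rewrite mul_mx_diag !mxE. Qed.
Lemma disqrtE (v : 'rV[R]_n) i : (v *m disqrt D) 0 i = v 0 i * (sq i)^-1.
Proof. by rewrite mul_mx_diag !mxE. Qed.

Lemma l0_scale (v w : 'rV[R]_n) : (forall i, (v 0 i != 0) = (w 0 i != 0)) -> l0 v = l0 w.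
Proof. by move=> h; rewrite /l0; apply: eq_card => i; rewrite !inE h. Qed.

Definition g k (i : 'I_n) := grad f (x k) 0 i.
Definition X k (i : 'I_n) := x k 0 i.

Lemma Cs_all k : Cs s (x k).
Proof.
case: iw => h0 hs; case: k => [//|k].
have [y [[ys _] ->]] := hs k.
rewrite /Cs (@l0_scale _ y) // => i.
by rewrite disqrtE mulf_eq0 negb_or invr_eq0 (gt_eqF (sq_pos i)) andbT.
Qed.

Lemma zE k i : (x k *m dsqrt D - grad f (x k) *m disqrt D) 0 i =
  X k i * sq i - g k i / sq i.
Proof. by rewrite mxE [X in _ + X]mxE dsqrtE disqrtE. Qed.

Lemma step_eq k : exists y, projCs s (x k *m dsqrt D - grad f (x k) *m disqrt D) y /\
  forall i, X k.+1 i = y 0 i * (sq i)^-1.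
Proof.
case: iw => _ hs; have [y [py e]] := hs k.
by exists y; split => // i; rewrite /X e disqrtE.
Qed.

Lemma proj_fix (z y : 'rV[R]_n) i : projCs s z y -> y 0 i != 0 -> y 0 i = z 0 i.
Proof.
move=> [ys ymin] yi.
pose y' := \row_j (if j == i then z 0 j else y 0 j).
have y's : Cs s y'.
  apply: leq_trans ys; apply: subset_leq_card; apply/fintype.subsetP => j.
  rewrite !inE /y' mxE; case: (j =P i) => [-> _|] //.
have := ymin _ y's; rewrite /dotv (bigD1 i) //= [X in _ <= X](bigD1 i) //=.
have -> : \sum_(j < n | j != i) (y' - z) 0 j * (y' - z) 0 j =
          \sum_(j < n | j != i) (y - z) 0 j * (y - z) 0 j.
  by apply: eq_bigr => j ji; rewrite !mxE (negbTE ji).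
rewrite !mxE eqxx subrr mul0r add0r gerDr => h.
apply/eqP; rewrite -subr_eq0 -sqrf_eq0; apply/eqP.
by apply: le_anti; rewrite expr2 h /= -expr2 sqr_ge0.
Qed.

Lemma step_fix k i : X k.+1 i != 0 -> D i i * (X k.+1 i - X k i) = - g k i.
Proof.
have [y [py hy]] := step_eq k; rewrite hy => nz.
have yi : y 0 i != 0 by move: nz; rewrite mulf_eq0 negb_or => /andP[].
rewrite (@proj_fix _ _ i py yi) zE -sq2.
have := sq_pos i; rewrite lt0r => /andP[sq0 _].
by rewrite /X; field.
Qed.

Lemma step_desc k :
  \sum_i (D i i * (X k.+1 i - X k i) ^+ 2 + 2 * g k i * (X k.+1 i - X k i)) <= 0.
Proof.
have [y [[ys ymin] hy]] := step_eq k.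
set z := (x k *m dsqrt D - _) in ymin.
have y's : Cs s (x k *m dsqrt D).
  rewrite /Cs (@l0_scale _ (x k)); first exact: Cs_all.
  by move=> i; rewrite dsqrtE mulf_eq0 negb_or (gt_eqF (sq_pos i)) andbT.
have := ymin _ y's; rewrite -/z.
have -> : dotv (y - z) (y - z) = \sum_i (D i i * (X k.+1 i - X k i) ^+ 2 +
    2 * g k i * (X k.+1 i - X k i)) + \sum_i (g k i ^+ 2 / D i i).
  rewrite -big_split; apply: eq_bigr => i _ /=.
  rewrite hy mxE [X in _ + X]mxE zE -!sq2 /g /X.
  have := sq_pos i; rewrite lt0r => /andP[sq0 _]; by field.
rewrite [X in _ <= X -> _](_ : _ = \sum_i (g k i ^+ 2 / D i i)).
  by move=> h; lra.
  rewrite /dotv; apply: eq_bigr => i _ /=.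
  rewrite mxE [X in _ + X]mxE zE dsqrtE -!sq2 /g /X.
  have := sq_pos i; rewrite lt0r => /andP[sq0 _]; by field.
Qed.

Definition Q k := \sum_i (D i i - H i i) * (X k.+1 i - X k i) ^+ 2.

Lemma Q_ge0 k : 0 <= Q k.
Proof. by apply: sumr_ge0 => i _; rewrite mulr_ge0 ?sqr_ge0 // ltW // dmh_pos. Qed.

Lemma desc_step k : f (x k.+1) <= f (x k) - 2^-1 * Q k.
Proof.
have := desc (x k) (x k.+1); rewrite qnorm_diag //.
have sd := step_desc k.
have E : dotv (grad f (x k)) (x k.+1 - x k) + 2^-1 * \sum_i H i i * (x k.+1 - x k) 0 i ^+ 2
  = 2^-1 * \sum_i (D i i * (X k.+1 i - X k i) ^+ 2 + 2 * g k i * (X k.+1 i - X k i))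
    - 2^-1 * Q k.
  rewrite /dotv !mulr_sumr -sumrB -big_split; apply: eq_bigr => i _ /=.
  have e : (x k.+1 - x k) 0 i = X k.+1 i - X k i by rewrite !mxE.
  rewrite e /g; by field.
rewrite -addrA E => h; lra.
Qed.

Lemma ddesc u v : f v <= f u + dotv (grad f u) (v - u) +
  2^-1 * \sum_i D i i * (v 0 i - u 0 i) ^+ 2.
Proof.
apply: (le_trans (desc u v)); rewrite lerD2l qnorm_diag // ler_pM2l ?invr_gt0 ?ltr0n //.
apply: ler_sum => i _; rewrite !mxE ler_wpM2r ?sqr_ge0 //.
by have := dmh_pos i; lra.
Qed.

Lemma grad_lip u v : \sum_i (grad f v 0 i - grad f u 0 i) ^+ 2 / D i i <=
  \sum_i D i i * (v 0 i - u 0 i) ^+ 2.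
Proof.
pose w := \row_i ((grad f u 0 i - grad f v 0 i) / D i i).
have h1 := ddesc v (v + w).
have h2 := grad_ineq f u (v + w) cvf (C1f.1 u).
have h3 := ddesc u v.
set T := \sum_i (grad f v 0 i - grad f u 0 i) ^+ 2 / D i i.
have E1 : dotv (grad f u) (v + w - u) = dotv (grad f u) (v - u) + dotv (grad f u) w.
  rewrite /dotv -big_split; apply: eq_bigr => i _ /=; rewrite !mxE; ring.
have E2 : dotv (grad f u) w - dotv (grad f v) (v + w - v) = T.
  rewrite /dotv /T -sumrB; apply: eq_bigr => i _ /=; rewrite !mxE.
  have := d_pos i; rewrite lt0r => /andP[d0 _]; by field.
have E3 : \sum_i D i i * ((v + w) 0 i - v 0 i) ^+ 2 = T.
  rewrite /T; apply: eq_bigr => i _ /=; rewrite !mxE.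
  have := d_pos i; rewrite lt0r => /andP[d0 _]; by field.
rewrite E3 in h1; rewrite E1 in h2; lra.
Qed.

Definition e k (i : 'I_n) := g k.+1 i - g k i - D i i * (X k.+1 i - X k i).

Lemma key_eq k (u : 'rV[R]_n) : (forall i, X k.+1 i = 0 -> u 0 i = 0) ->
  dotv (grad f (x k.+1)) (u - x k.+1) = - \sum_i e k i * (X k.+1 i - u 0 i).
Proof.
move=> hu; rewrite /dotv -sumrN; apply: eq_bigr => i _.
have ee : (u - x k.+1) 0 i = u 0 i - X k.+1 i by rewrite !mxE.
rewrite ee /e.
have [h0|hn] := eqVneq (X k.+1 i) 0.
  by rewrite h0 (hu _ h0) /g; ring.
have := step_fix k i hn; rewrite /g => hf.
have -> : grad f (x k) 0 i = - (D i i * (X k.+1 i - X k i)) by rewrite hf opprK.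
ring.
Qed.

Lemma key_ineq k (u : 'rV[R]_n) : (forall i, X k.+1 i = 0 -> u 0 i = 0) ->
  f (x k.+1) - f u <= \sum_i e k i * (X k.+1 i - u 0 i).
Proof.
move=> hu; have := grad_ineq f (x k.+1) u cvf (C1f.1 _).
rewrite key_eq //; lra.
Qed.

Lemma key_ineq_rsc k (u : 'rV[R]_n) sigma :
  (forall x y, (l0 (x - y) <= s)%N ->
      f x + dotv (grad f x) (y - x) + sigma / 2 * dotv (x - y) (x - y) <= f y) ->
  (forall i, X k.+1 i = 0 -> u 0 i = 0) ->
  f (x k.+1) - f u <= \sum_i e k i * (X k.+1 i - u 0 i)
     - sigma / 2 * \sum_i (X k.+1 i - u 0 i) ^+ 2.
Proof.
move=> hr hu.
have hl : (l0 (x k.+1 - u) <= s)%N.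
  apply: leq_trans (Cs_all k.+1); apply: subset_leq_card; apply/fintype.subsetP => j.
  rewrite !inE !mxE; apply: contra => /eqP h0.
  by rewrite h0 (hu j h0) subrr.
have := hr _ _ hl; rewrite key_eq //.
have -> : dotv (x k.+1 - u) (x k.+1 - u) = \sum_i (X k.+1 i - u 0 i) ^+ 2.
  by apply: eq_bigr => i _; rewrite !mxE expr2.
lra.
Qed.

Definition dsum := \sum_i D i i.
Definition lam := \sum_i D i i / (D i i - H i i).

Lemma le_sum_term (F : 'I_n -> R) j : (forall i, 0 <= F i) -> F j <= \sum_i F i.
Proof.
move=> h; rewrite (bigD1 j) //= lerDl; exact: sumr_ge0.
Qed.

Lemma d_le_dsum i : D i i <= dsum.
Proof. by rewrite /dsum; apply: (le_sum_term (fun j => D j j)) => j; exact: ltW (d_pos j). Qed.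

Lemma lam_ge i : D i i / (D i i - H i i) <= lam.
Proof.
rewrite /lam; apply: (le_sum_term (fun j => D j j / (D j j - H j j))) => j; apply: divr_ge0; first exact: ltW (d_pos j).
exact: ltW (dmh_pos j).
Qed.

Lemma dsum_ge0 : 0 <= dsum.
Proof. by apply: sumr_ge0 => j _; exact: ltW (d_pos j). Qed.

Lemma lam_ge0 : 0 <= lam.
Proof.
apply: sumr_ge0 => j _; apply: divr_ge0; first exact: ltW (d_pos j).
exact: ltW (dmh_pos j).
Qed.

Definition Ce := 4 * dsum * lam.

Lemma E_bound k : \sum_i e k i ^+ 2 <= Ce * Q k.
Proof.
set a := fun i => g k.+1 i - g k i.
set dl := fun i => X k.+1 i - X k i.
have step1 : \sum_i e k i ^+ 2 <=
    \sum_i (2 * dsum * (a i ^+ 2 / D i i) + 2 * dsum * (D i i * dl i ^+ 2)).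
  apply: ler_sum => i _.
  have dp := d_pos i; have dl0 := d_le_dsum i.
  have h1 : a i ^+ 2 <= dsum * (a i ^+ 2 / D i i).
    have E : a i ^+ 2 = D i i * (a i ^+ 2 / D i i).
      by field; rewrite gt_eqF.
    rewrite [X in X <= _]E ler_wpM2r //.
    by rewrite divr_ge0 ?sqr_ge0 // ltW.
  have h2 : (D i i * dl i) ^+ 2 <= dsum * (D i i * dl i ^+ 2).
    by rewrite exprMn expr2 -mulrA ler_wpM2r // mulr_ge0 ?sqr_ge0 // ltW.
  have h3 : e k i ^+ 2 <= 2 * a i ^+ 2 + 2 * (D i i * dl i) ^+ 2.
    rewrite /e -/(a i) -/(dl i) /a /dl.
    set p := g k.+1 i - g k i; set q := D i i * (X k.+1 i - X k i).
    have := sqr_ge0 (p + q); rewrite /p /q; nra.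
  lra.
rewrite big_split /= -!mulr_sumr in step1.
have l1 := grad_lip (x k) (x k.+1).
have l1' : \sum_i a i ^+ 2 / D i i <= \sum_i D i i * dl i ^+ 2.
  exact: l1.
have lb : \sum_i D i i * dl i ^+ 2 <= lam * Q k.
  rewrite /Q mulr_sumr; apply: ler_sum => i _.
  have dp := d_pos i; have mp := dmh_pos i.
  have E : D i i * dl i ^+ 2 = (D i i / (D i i - H i i)) * ((D i i - H i i) * dl i ^+ 2).
    by field; rewrite gt_eqF.
  rewrite E ler_wpM2r ?lam_ge //.
  by rewrite mulr_ge0 ?sqr_ge0 // ltW.
have ds := dsum_ge0.
have m1 := ler_wpM2l ds l1'.
have m2 := ler_wpM2l ds lb.
rewrite /Ce; lra.
Qed.


Lemma main_sec (M : R) (hM : forall k, `|x k| <= M) :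
  exists fstar : R,
    (fun k => f (x k)) @ \oo --> fstar /\
    (exists (K : nat) (c : R), 0 < c /\
        forall k, (K <= k)%N -> f (x k) - fstar <= c / k%:R) /\
    (restricted_strongly_convex f s ->
      exists (c rho : R), 0 < c /\ 0 < rho < 1 /\
        \forall k \near \oo, f (x k) - fstar <= c * rho ^+ k).
Proof.
set u := fun k => f (x k).
have mono1 : forall k, u k.+1 <= u k.
  by move=> k; have := desc_step k; have := Q_ge0 k; rewrite /u; lra.
have mono : forall k m, (k <= m)%N -> u m <= u k.
  move=> k m hkm; rewrite -(subnKC hkm); elim: (m - k)%N => [|j IH].
    by rewrite addn0.
  by rewrite addnS; apply: le_trans (mono1 _) IH.
have xb : forall k i, `|x k 0 i| <= M := fun k i => le_trans (entry_le_norm _ i) (hM k).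
have sE : forall (a b : 'rV[R]_n) i, (a - b) 0 i = a 0 i - b 0 i by move=> a b i; rewrite !mxE.
pose lb := f (x 0%N) - \sum_i `|g 0 i| * (2 * M).
have lbP : forall k, lb <= u k.
  move=> k; have := grad_ineq f (x 0%N) (x k) cvf (C1f.1 _).
  have : - \sum_i `|g 0 i| * (2 * M) <= dotv (grad f (x 0%N)) (x k - x 0%N).
    rewrite -sumrN; apply: ler_sum => i _; rewrite sE.
    have h1 := xb k i; have h2 := xb 0%N i.
    have h3 : `|grad f (x 0%N) 0 i * (x k 0 i - x 0%N 0 i)| <= `|g 0 i| * (2 * M).
      rewrite normrM ler_wpM2l //; apply: le_trans (ler_normB _ _) _; lra.
    by move: h3; rewrite ler_norml => /andP[].
  rewrite /lb /u; lra.
have hlb : has_lbound (range u) by exists lb => _ [k _ <-].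
have nonin : nonincreasing_seq u by move=> a b hab; exact: mono.
have hcv := nonincreasing_cvgn nonin hlb.
set fstar := inf _ in hcv.
exists fstar.
have fle : forall k, fstar <= u k.
  move=> k; apply: (cvgr_to_le hcv); exists k => // m /= hm; exact: mono.
pose r k := u k - fstar.
have r0 : forall k, 0 <= r k by move=> k; rewrite /r subr_ge0.
have rdec : forall k, Q k <= 2 * (r k - r k.+1).
  by move=> k; have := desc_step k; rewrite /r /u; lra.
have rmono : forall k, 0 <= r k - r k.+1 by move=> k; have := mono1 k; rewrite /r; lra.
have [K0 hK0] := supp_rec x.
have approx : forall k, (K0 <= k)%N -> forall eps, 0 < eps ->
    exists m, supp (x m) = supp (x k) /\ u m - fstar <= eps.
  move=> k hk eps ep.
  have [N _ hN] := (cvgrPdist_le _ _).1 hcv eps ep.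
  have [m [hm sm]] := hK0 k hk N.
  exists m; split => //; have := hN m hm; rewrite /= distrC.
  by apply: le_trans; exact: ler_norm.
have suppI : forall k m, supp (x m) = supp (x k.+1) -> forall i, X k.+1 i = 0 -> x m 0 i = 0.
  move=> k m sm i hi.
  have : i \notin supp (x k.+1) by rewrite inE negbK; apply/eqP.
  by rewrite -sm inE negbK => /eqP.
have wb : forall k m i, (X k.+1 i - x m 0 i) ^+ 2 <= 4 * M ^+ 2.
  move=> k m i; have := xb k.+1 i; have := xb m i; rewrite !ler_norml /X.
  move=> /andP[a1 a2] /andP[b1 b2]; nra.
pose Bw := \sum_(i < n) 4 * M ^+ 2 + 1.
have Bwp : 0 < Bw.
  by rewrite /Bw ltr_wpDl // sumr_ge0 // => i _; rewrite mulr_ge0 // sqr_ge0.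
have wsum : forall k m, \sum_i (X k.+1 i - x m 0 i) ^+ 2 <= Bw.
  move=> k m; apply: le_trans (_ : _ <= \sum_(i < n) 4 * M ^+ 2) _.
    by apply: ler_sum => i _; exact: wb.
  by rewrite /Bw lerDl.
have Ce0 : 0 <= Ce by rewrite /Ce !mulr_ge0 ?dsum_ge0 ?lam_ge0.
split; first exact: hcv.
split.
  have recH : forall k, (K0 <= k)%N -> r k.+1 ^+ 2 <= (Bw * Ce * 2 + 1) * (r k - r k.+1).
    move=> k hk.
    set E := \sum_i e k i ^+ 2.
    have E0 : 0 <= E by apply: sumr_ge0 => i _; exact: sqr_ge0.
    have hsq : r k.+1 ^+ 2 <= Bw * E.
      apply: sq_bound => //.
      move=> eps t ep tp.
      have hk1 : (K0 <= k.+1)%N by apply: leqW.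
      have [m [sm hm]] := approx _ hk1 eps ep.
      have ki := key_ineq k (x m) (suppI k m sm).
      have am := sum_amgm t (e k) (fun i => X k.+1 i - x m 0 i) tp.
      have ws := wsum k m.
      have t2 : 0 <= (2 * t)^-1 by rewrite invr_ge0 mulr_ge0 // ltW.
      have := ler_wpM2l t2 ws.
      move: hm ki am; rewrite /r /u /E /=; lra.
    have h1 := ler_wpM2l (ltW Bwp) (E_bound k).
    have h2 := ler_wpM2l (mulr_ge0 (ltW Bwp) Ce0) (rdec k).
    have h3 := rmono k.
    have h4 : 0 <= Bw * Ce * 2 * (r k - r k.+1).
      apply: mulr_ge0 h3; apply: mulr_ge0 => //; apply: mulr_ge0 => //; exact: ltW.
    apply: (le_trans hsq); apply: (le_trans h1); rewrite mulrA; apply: (le_trans h2).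
    by rewrite mulrA [X in _ <= X]mulrDl mul1r lerDl.
  have Ap : 0 < Bw * Ce * 2 + 1.
    by apply: ltr_wpDl => //; apply: mulr_ge0 => //; apply: mulr_ge0 => //; exact: ltW.
  have [K [c [cp hc]]] := recA r _ K0 Ap r0 recH.
  by exists K, c; split.
move=> [sig [sp hr]].
have recH : forall k, (K0 <= k)%N -> r k.+1 <= (sig^-1 * Ce + 1) * (r k - r k.+1).
  move=> k hk.
  set E := \sum_i e k i ^+ 2.
  have E0 : 0 <= E by apply: sumr_ge0 => i _; exact: sqr_ge0.
  have si : 0 < sig^-1 by rewrite invr_gt0.
  have hE : r k.+1 <= sig^-1 / 2 * E.
    apply/ler_addgt0Pr => eps ep.
    have hk1 : (K0 <= k.+1)%N by apply: leqW.
    have [m [sm hm]] := approx _ hk1 eps ep.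
    have ki := key_ineq_rsc k (x m) sig hr (suppI k m sm).
    have am := sum_amgm (sig^-1) (e k) (fun i => X k.+1 i - x m 0 i) si.
    have e2 : (2 * sig^-1)^-1 = sig / 2 by field; rewrite gt_eqF.
    rewrite e2 in am.
    move: hm ki am; rewrite /r /u /E /=; lra.
  have h1 := ler_wpM2l (ltW (divr_gt0 si (ltr0n _ 2))) (E_bound k).
  have h2 := ler_wpM2l (mulr_ge0 (ltW (divr_gt0 si (ltr0n _ 2))) Ce0) (rdec k).
  have h3 := rmono k.
  have h4 : 0 <= sig^-1 * Ce * (r k - r k.+1).
    apply: mulr_ge0 h3; apply: mulr_ge0 => //; exact: ltW.
  apply: (le_trans hE); apply: (le_trans h1); rewrite mulrA; apply: (le_trans h2).
  have e3 : forall d : R, sig^-1 / 2 * Ce * (2 * d) = sig^-1 * Ce * d.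
    by move=> d; rewrite mulrCA !mulrA [2 / sig / 2]mulrAC divff ?mul1r.
  rewrite e3.
  by rewrite [X in _ <= X]mulrDl mul1r lerDl.
have bp : 0 < sig^-1 * Ce + 1.
  by apply: ltr_wpDl => //; apply: mulr_ge0 => //; rewrite invr_ge0 ltW.
have [c [rho [cp [rh hc]]]] := recB r _ K0 bp r0 recH.
exists c, rho; split => //; split => //.
by exists K0 => // k /= hk; exact: hc.
Qed.

End Alg.

Theorem corollary4p10 (R : realType) (n s : nat) (f : 'rV[R]_n -> R)
    (H D : 'M[R]_n) (x : nat -> 'rV[R]_n) :
  (0 < s)%N ->
  C1 f -> convexf f ->
  diagm H -> (forall i, 0 <= H i i) ->
  (forall u v, f v <= f u + dotv (grad f u) (v - u) + 2^-1 * qnorm H (v - u)) ->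
  diagm D -> pd_gt D H ->
  IWHT f s D x ->
  (exists M : R, forall k, `|x k| <= M) ->
  exists fstar : R,
    (fun k => f (x k)) @ \oo --> fstar /\
    (exists (K : nat) (c : R), 0 < c /\
        forall k, (K <= k)%N -> f (x k) - fstar <= c / k%:R) /\
    (restricted_strongly_convex f s ->
      exists (c rho : R), 0 < c /\ 0 < rho < 1 /\
        \forall k \near \oo, f (x k) - fstar <= c * rho ^+ k).
Proof.
move=> _ C1f cvf dH H0 desc dD DH iw [M hM].
exact: (@main_sec R n s f H D x C1f cvf dH H0 desc dD DH iw M hM).
Qed.
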